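(* For $n\ge1$ and every $\pi\in\mathfrak{S}_n$, $$\mathsf{des}\,\pi+(31\text{-}2)\pi+1=\pi(1)+(13\text{-}2)\pi.$$
   Context: $\mathsf{des}\,\pi=\#\{i\in[n-1]:\pi(i)>\pi(i+1)\}$; $(31\text{-}2)\pi=\#\{(i,j):i+1<j\le n,\ \pi(i+1)<\pi(j)<\pi(i)\}$; $(13\text{-}2)\pi=\#\{(i,j):i+1<j\le n,\ \pi(i)<\pi(j)<\pi(i+1)\}$. *)

(* Defs.v *)
From mathcomp Require Import all_boot all_fingroup.
Set Implicit Arguments. Unset Strict Implicit. Unset Printing Implicit Defensive.

(* A permutation s : 'S_n acts on {0,...,n-1}.  We view it as the usual
   permutation pi of [n] = {1,...,n} via  pi(i) = s(i-1) + 1  for 1 <= i <= n. *)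
Definition pival (n : nat) (s : 'S_n) (i : nat) : nat :=
  match i with
  | 0 => 0
  | i'.+1 => if insub i' is Some j then (s j : nat).+1 else 0
  end.

Definition des (n : nat) (s : 'S_n) : nat :=
  \sum_(1 <= i < n) (pival s (i.+1) < pival s i).

Definition pat31_2 (n : nat) (s : 'S_n) : nat :=
  \sum_(1 <= i < n.+1) \sum_(i.+2 <= j < n.+1)
     ((pival s i.+1 < pival s j) && (pival s j < pival s i)).

Definition pat13_2 (n : nat) (s : 'S_n) : nat :=
  \sum_(1 <= i < n.+1) \sum_(i.+2 <= j < n.+1)
     ((pival s i < pival s j) && (pival s j < pival s i.+1)).

(* Main.v *)
Require Import Defs.
From mathcomp Require Import all_boot all_fingroup.
From mathcomp Require Import zify.

Definition cc (p : nat -> nat) n i := \sum_(i.+1 <= j < n.+1) (p j < p i).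
Definition t13 (p : nat -> nat) n i :=
  \sum_(i.+2 <= j < n.+1) ((p i < p j) && (p j < p i.+1)).
Definition t31 (p : nat -> nat) n i :=
  \sum_(i.+2 <= j < n.+1) ((p i.+1 < p j) && (p j < p i)).

Lemma pointw a b x : x != a -> x != b -> a != b ->
  ((a < x) && (x < b)) + (x < a) = ((b < x) && (x < a)) + (x < b).
Proof.
move=> /eqP h1 /eqP h2 /eqP h3.
have [g1|g1] := ltnP a x; have [g2|g2] := ltnP x b;
have [g3|g3] := ltnP b x; have [g4|g4] := ltnP x a; rewrite /=; lia.
Qed.

Lemma local (p : nat -> nat) n i :
  (forall j, i.+2 <= j <= n -> p j != p i /\ p j != p i.+1) ->
  p i != p i.+1 -> i.+1 <= n ->
  t13 p n i + cc p n i = t31 p n i + cc p n i.+1 + (p i.+1 < p i).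
Proof.
move=> H hab hin.
rewrite /cc (@big_ltn _ _ _ i.+1) //= /t13 /t31.
set A := \sum_(i.+2 <= j < n.+1) ((p i < p j) && (p j < p i.+1)).
set B := \sum_(i.+2 <= j < n.+1) (p j < p i).
set C := \sum_(i.+2 <= j < n.+1) ((p i.+1 < p j) && (p j < p i)).
set D := \sum_(i.+2 <= j < n.+1) (p j < p i.+1).
suff : A + B = C + D by lia.
rewrite /A /B /C /D -!big_split /=.
apply: eq_big_nat => j /andP [hj1 hj2].
have [h1 h2] := H j (ltac:(apply/andP; split=> //; lia)).
by apply: pointw.
Qed.

Lemma tele (p : nat -> nat) n :
  (forall i j, 1 <= i <= n -> 1 <= j <= n -> p i = p j -> i = j) ->
  forall k, k.+1 <= n ->
  \sum_(1 <= i < k.+1) t13 p n i + cc p n 1 =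
  \sum_(1 <= i < k.+1) t31 p n i + \sum_(1 <= i < k.+1) (p i.+1 < p i) + cc p n k.+1.
Proof.
move=> Hinj; elim=> [|k IH] hk.
  by rewrite !big_geq.
rewrite !(@big_nat_recr _ _ _ k.+1) //=.
have := IH (ltnW hk).
have := @local p n k.+1.
have HH : forall j, k.+3 <= j <= n -> p j != p k.+1 /\ p j != p k.+2.
  move=> j hj; split; apply/eqP => e; have := Hinj _ _ _ _ e; lia.
have hab : p k.+1 != p k.+2 by apply/eqP => e; have := Hinj _ _ _ _ e; lia.
move=> /(_ HH hab hk); lia.
Qed.

Lemma pival_ord n (s : 'S_n) k (hk : k < n) : pival s k.+1 = (s (Ordinal hk)).+1.
Proof.
rewrite /=; case: insubP => [j _ hj|]; last by rewrite hk.
by congr (_.+1); congr (fun_of_perm s _); apply: val_inj.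
Qed.

Lemma sum_lt n m : m <= n -> \sum_(0 <= k < n) (k < m) = m.
Proof.
move=> hm; rewrite (@big_cat_nat _ _ _ m) //=.
rewrite (@eq_big_nat _ _ _ 0 m _ (fun _ => 1)); last by move=> i /andP[_ ->].
rewrite (@eq_big_nat _ _ _ m n _ (fun _ => 0)); last by move=> i /andP[h _]; rewrite ltnNge h.
by rewrite !sum_nat_const_nat; lia.
Qed.

Theorem lemma5p4 (n : nat) (hn : 1 <= n) (s : 'S_n) :
  des s + pat31_2 s + 1 = pival s 1 + pat13_2 s.
Proof.
set p := pival s.
have Hinj : forall i j, 1 <= i <= n -> 1 <= j <= n -> p i = p j -> i = j.
  move=> [|i] [|j] // hi hj.
  have hi' : i < n by lia.
  have hj' : j < n by lia.
  rewrite /p (@pival_ord _ s _ hi') (@pival_ord _ s _ hj') => -[] /val_inj /perm_inj -[] ->//.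
have Hp1 : p 1 = (s (Ordinal hn)).+1 by rewrite /p (@pival_ord _ s _ hn).
have Hc1 : cc p n 1 = (s (Ordinal hn)).
  have : \sum_(1 <= j < n.+1) (p j < p 1) = cc p n 1.
    by rewrite /cc big_ltn // ltnn.
  move=> <-.
  rewrite big_add1 (_ : n.+1.-1 = n) // big_mkord.
  rewrite (eq_bigr (fun k : 'I_n => nat_of_bool (s k < s (Ordinal hn)))); last first.
    move=> k _; rewrite Hp1 /p (@pival_ord _ s _ (ltn_ord k)) ltnS.
    by congr (_ < _); congr (fun_of_perm s _); apply: val_inj.
  rewrite (reindex_perm s^-1) /=; under eq_bigr => j _ do rewrite permKV.
  rewrite -(big_mkord xpredT (fun k => nat_of_bool (k < s (Ordinal hn)))).
  by apply: sum_lt; apply: ltnW.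
have Hcn : cc p n n = 0 by rewrite /cc big_geq.
have E13 : pat13_2 s = \sum_(1 <= i < n) t13 p n i.
  by rewrite /pat13_2 big_nat_recr // [X in _ + X = _]big_geq ?addn0.
have E31 : pat31_2 s = \sum_(1 <= i < n) t31 p n i.
  by rewrite /pat31_2 big_nat_recr // [X in _ + X = _]big_geq ?addn0.
have Ed : des s = \sum_(1 <= i < n) (p i.+1 < p i) by [].
case: n hn s p Hinj Hp1 Hc1 Hcn E13 E31 Ed => [//|k] hn s p Hinj Hp1 Hc1 Hcn E13 E31 Ed.
have := @tele p k.+1 Hinj k (leqnn _).
rewrite Ed E13 E31 Hcn Hc1 Hp1; lia.
Qed.
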